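(* Fix $n\in\mathbb{N}$ and $b\in\mathbb{R}^n\setminus\{0\}$. Let $\mathcal{N}\subset\mathbb{R}^{n\times n}$ be the set of real matrices $A$ such that $A^2$ has $n$ distinct eigenvalues, and let $\mathcal{O}\subset\mathbb{R}^{n\times n}$ be the set of real matrices $A$ such that $b^T\eta\neq 0$ for every left eigenvector $\eta\in\mathbb{C}^n$ of $A$. Then $GL(n)\cap\mathcal{N}\cap\mathcal{O}$ is open and dense in $\mathbb{R}^{n\times n}$.
   Context: $GL(n)$ denotes the set of invertible real $n\times n$ matrices. A left eigenvector of $A$ is a nonzero $\eta\in\mathbb{C}^n$ with $\eta^TA=\lambda\eta^T$ for some $\lambda\in\mathbb{C}$; $b^T\eta$ denotes the (non-conjugated) bilinear product $\sum_j b_j\eta_j$. The topology on $\mathbb{R}^{n\times n}$ is the standard (norm) topology. *)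

(* Defs.v *)
From HB Require Import structures.
From mathcomp Require Import all_boot all_algebra.
From mathcomp Require Import all_classical all_reals all_analysis.
From mathcomp Require Import complex.
Import GRing.Theory Num.Theory numFieldNormedType.Exports.
Local Open Scope ring_scope.
Local Open Scope complex_scope.

Definition toC {R : rcfType} {m k : nat} (A : 'M[R]_(m, k)) : 'M[R[i]]_(m, k) :=
  map_mx (fun x : R => x%:C) A.

Definition sq_distinct_eig {R : rcfType} {n : nat} (A : 'M[R]_n) : Prop :=
  exists s : seq R[i],
    [/\ size s = n, uniq s & forall z, z \in s -> eigenvalue (toC (A *m A)) z].

(* eta (a row vector, i.e. eta^T) is a left eigenvector of A:
   eta <> 0 and eta^T A = lambda eta^T for some complex lambda. *)
Definition left_eigenvector {R : rcfType} {n : nat} (A : 'M[R]_n)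
  (eta : 'rV[R[i]]_n) : Prop :=
  eta != 0 /\ exists lambda : R[i], eta *m toC A = lambda *: eta.

(* O: b^T eta <> 0 (non-conjugated bilinear product) for every left eigenvector. *)
Definition obs_cond {R : rcfType} {n : nat} (b : 'cV[R]_n) (A : 'M[R]_n) : Prop :=
  forall eta : 'rV[R[i]]_n, left_eigenvector A eta ->
    \sum_(j < n) (b j 0)%:C * eta 0 j != 0.

Definition good_set {R : rcfType} {n : nat} (b : 'cV[R]_n) : set 'M[R]_n :=
  [set A | A \in unitmx /\ sq_distinct_eig A /\ obs_cond b A].

(* Main.v *)
Require Import Defs.
From HB Require Import structures.
From mathcomp Require Import all_boot all_algebra all_field.
From mathcomp Require Import all_classical all_reals all_analysis.
From mathcomp Require Import complex.
Import GRing.Theory Num.Theory numFieldNormedType.Exports.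
Local Open Scope ring_scope.

Section Good.
Variables (R : realType) (n : nat).
Local Notation M := 'M[R]_n.

Definition lpoly (f : M -> R) :=
  forall A D : M, exists p : {poly R}, forall t, f (A + t *: D) = p.[t].
Definition Good (f : M -> R) := continuous f /\ lpoly f.

Lemma Good_cst c : Good (fun=> c).
Proof.
split; first exact: cst_continuous.
by move=> A D; exists c%:P => t; rewrite hornerC.
Qed.

Lemma Good_coord i j : Good (fun A : M => A i j).
Proof.
split; first exact: coord_continuous.
move=> A D; exists ((A i j)%:P + (D i j)%:P * 'X) => t.
by rewrite !mxE hornerD hornerC hornerMX hornerC mulrC.
Qed.

Lemma Good_add f g : Good f -> Good g -> Good (fun A => f A + g A).
Proof.
move=> [cf lf] [cg lg]; split.
  by move=> x; apply: continuousD; [exact: cf|exact: cg].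
move=> A D; have [p hp] := lf A D; have [q hq] := lg A D.
by exists (p + q) => t; rewrite hp hq hornerD.
Qed.

Lemma Good_mul f g : Good f -> Good g -> Good (fun A => f A * g A).
Proof.
move=> [cf lf] [cg lg]; split.
  by move=> x; apply: continuousM; [exact: cf|exact: cg].
move=> A D; have [p hp] := lf A D; have [q hq] := lg A D.
by exists (p * q) => t; rewrite hp hq hornerM.
Qed.

Lemma Good_seq_sum (I : Type) (r : seq I) (F : M -> I -> R) :
  (forall i, Good (F ^~ i)) -> Good (fun A => \sum_(i <- r) F A i).
Proof.
move=> h; elim: r => [|x r IH].
  by under eq_fun do rewrite big_nil; exact: Good_cst.
under eq_fun do rewrite big_cons; exact: Good_add.
Qed.

Lemma Good_seq_prod (I : Type) (r : seq I) (F : M -> I -> R) :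
  (forall i, Good (F ^~ i)) -> Good (fun A => \prod_(i <- r) F A i).
Proof.
move=> h; elim: r => [|x r IH].
  by under eq_fun do rewrite big_nil; exact: Good_cst.
under eq_fun do rewrite big_cons; exact: Good_mul.
Qed.

Lemma Good_sum (I : finType) (F : M -> I -> R) :
  (forall i, Good (F ^~ i)) -> Good (fun A => \sum_i F A i).
Proof.
move=> h; under eq_fun do rewrite -big_enum; exact: Good_seq_sum.
Qed.

Lemma Good_prod (I : finType) (F : M -> I -> R) :
  (forall i, Good (F ^~ i)) -> Good (fun A => \prod_i F A i).
Proof.
move=> h; under eq_fun do rewrite -big_enum; exact: Good_seq_prod.
Qed.

Lemma Good_det k (F : M -> 'M[R]_k) :
  (forall i j, Good (fun A => F A i j)) -> Good (fun A => \det (F A)).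
Proof.
move=> h; rewrite /determinant; apply: Good_sum => s.
apply: Good_mul; first exact: Good_cst.
by apply: Good_prod => i; exact: h.
Qed.

Definition Goodmx {p q} (F : M -> 'M[R]_(p, q)) := forall i j, Good (fun A => F A i j).

Lemma Goodmx_mul p q r (F : M -> 'M[R]_(p, q)) (G : M -> 'M[R]_(q, r)) :
  Goodmx F -> Goodmx G -> Goodmx (fun A => F A *m G A).
Proof.
move=> hF hG i j; under eq_fun do rewrite mxE.
by apply: Good_sum => k; apply: Good_mul.
Qed.

Lemma Goodmx_id : Goodmx (fun A : M => A).
Proof. by move=> i j; exact: Good_coord. Qed.

Lemma Goodmx_cst p q (B : 'M[R]_(p, q)) : Goodmx (fun=> B).
Proof. by move=> i j; exact: Good_cst. Qed.

Lemma Goodmx_exp k : Goodmx (fun A : M => A ^+ k).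
Proof.
elim: k => [|k IH].
  by under eq_fun do rewrite expr0; exact: Goodmx_cst.
under eq_fun do rewrite exprS -mulmxE; exact: Goodmx_mul Goodmx_id IH.
Qed.

Definition PGood (f : M -> {poly R}) := forall k, Good (fun A => (f A)`_k).

Lemma PGood_cst p : PGood (fun=> p).
Proof. by move=> k; exact: Good_cst. Qed.

Lemma PGood_C f : Good f -> PGood (fun A => (f A)%:P).
Proof.
move=> h k; under eq_fun do rewrite coefC.
by case: (k == 0); [exact: h | exact: Good_cst].
Qed.

Lemma PGood_add f g : PGood f -> PGood g -> PGood (fun A => f A + g A).
Proof. by move=> hf hg k; under eq_fun do rewrite coefD; exact: Good_add. Qed.

Lemma PGood_mul f g : PGood f -> PGood g -> PGood (fun A => f A * g A).
Proof.
move=> hf hg k; under eq_fun do rewrite coefM.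
by apply: Good_sum => j; apply: Good_mul.
Qed.

Lemma PGood_opp f : PGood f -> PGood (fun A => - f A).
Proof.
move=> hf k; under eq_fun do rewrite coefN -mulN1r.
by apply: Good_mul => //; exact: Good_cst.
Qed.

Lemma PGood_deriv f : PGood f -> PGood (fun A => (f A)^`()).
Proof.
move=> hf k; under eq_fun do rewrite coef_deriv -mulr_natr.
by apply: Good_mul => //; exact: Good_cst.
Qed.

Lemma PGood_seq_sum (I : Type) (r : seq I) (F : M -> I -> {poly R}) :
  (forall i, PGood (F ^~ i)) -> PGood (fun A => \sum_(i <- r) F A i).
Proof.
move=> h; elim: r => [|x r IH].
  by under eq_fun do rewrite big_nil; exact: PGood_cst.
under eq_fun do rewrite big_cons; exact: PGood_add.
Qed.

Lemma PGood_seq_prod (I : Type) (r : seq I) (F : M -> I -> {poly R}) :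
  (forall i, PGood (F ^~ i)) -> PGood (fun A => \prod_(i <- r) F A i).
Proof.
move=> h; elim: r => [|x r IH].
  by under eq_fun do rewrite big_nil; exact: PGood_cst.
under eq_fun do rewrite big_cons; exact: PGood_mul.
Qed.

Lemma PGood_det k (F : M -> 'M[{poly R}]_k) :
  (forall i j, PGood (fun A => F A i j)) -> PGood (fun A => \det (F A)).
Proof.
move=> h; rewrite /determinant.
under eq_fun do rewrite -big_enum.
apply: PGood_seq_sum => s; apply: PGood_mul; first exact: PGood_cst.
under eq_fun do rewrite -big_enum.
by apply: PGood_seq_prod => i; exact: h.
Qed.

Lemma PGood_char_poly (F : M -> 'M[R]_n) : Goodmx F ->
  PGood (fun A => char_poly (F A)).
Proof.
move=> h; rewrite /char_poly; apply: PGood_det => i j.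
under eq_fun do rewrite /char_poly_mx !mxE.
apply: PGood_add; first exact: PGood_cst.
by apply: PGood_opp; apply: PGood_C; exact: h.
Qed.

Definition Syl (a b : nat) (p q : {poly R}) : 'M[R]_(b + a) :=
  \matrix_(i < b + a, j < b + a) match fintype.split i with
                 | inl k => p`_(j - k) *+ (k <= j)%N
                 | inr k => q`_(j - k) *+ (k <= j)%N end.

Lemma resultantE p q : resultant p q = \det (Syl (size p).-1 (size q).-1 p q).
Proof.
rewrite /resultant; congr (\det _); apply/matrixP => i j.
by rewrite Sylvester_mxE mxE.
Qed.

Lemma Good_resultant f g a b : PGood f -> PGood g ->
  (forall A, (size (f A)).-1 = a) -> (forall A, (size (g A)).-1 = b) ->
  Good (fun A => resultant (f A) (g A)).
Proof.
move=> hf hg sf sg.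
under eq_fun => A do rewrite resultantE (sf A) (sg A).
apply: Good_det => i j; under eq_fun do rewrite mxE.
case: (fintype.split i) => k.
  by under eq_fun do rewrite -mulr_natr; apply: Good_mul => //; exact: Good_cst.
by under eq_fun do rewrite -mulr_natr; apply: Good_mul => //; exact: Good_cst.
Qed.

Local Open Scope classical_set_scope.

Lemma Good_open f : Good f -> open [set A | f A != 0].
Proof.
move=> [cf _]; exact: ((continuousP f).1 cf _ (@open_neq R 0)).
Qed.

Lemma Good_dense f : Good f -> (exists A1, f A1 != 0) ->
  dense [set A | f A != 0].
Proof.
move=> [cf lf] [A1 fA1] O [A0 OA0] oO.
pose D := A1 - A0.
have [p hp] := lf A0 D.
have p1 : p.[1] != 0 by rewrite -hp scale1r /D addrC subrK.
have pn0 : p != 0 by apply: contraNneq p1 => ->; rewrite horner0.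
have [m [g hg pE]] := multiplicity_XsubC p 0.
move: hg; rewrite pn0 /= => hg.
have h1 : \forall t \near (0 : R), O (A0 + t *: D).
  have cg : {for 0, continuous (fun t : R => A0 + t *: D)}.
    apply: continuousD; first exact: cst_continuous.
    by apply: continuousZr_tmp => x; exact: cvg_id.
  apply: cg; rewrite /= scale0r addr0.
  by apply: open_nbhs_nbhs; split.
have h2 : \forall t \near (0 : R), g.[t] != 0.
  have := @continuous_horner R g 0 [set x | x != 0].
  apply; apply: open_nbhs_nbhs; split; first exact: open_neq.
  by rewrite /=; move: hg; rewrite /root.
have h3 : \forall t \near (0 : R)^', t != 0 := nbhs_dnbhs_neq 0.
have : \forall t \near (0 : R)^', [/\ O (A0 + t *: D), g.[t] != 0 & t != 0].
  near=> t; split.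
  - by near: t; apply: nbhs_dnbhs.
  - by near: t; apply: nbhs_dnbhs.
  - by near: t.
move=> /filter_ex [t [Ot gt tn0]].
exists (A0 + t *: D); split => //=.
rewrite hp pE hornerM horner_exp hornerXsubC subr0 mulf_neq0 //.
exact: expf_neq0.
Unshelve. all: by end_near.
Qed.

End Good.


Lemma horner_mx_expand (R : comNzRingType) n (A : 'M[R]_n.+1) (p : {poly R}) :
  horner_mx A p = \sum_(i < size p) p`_i *: A ^+ i.
Proof.
rewrite -{1}[p]coefK poly_def rmorph_sum; apply: eq_bigr => i _.
by rewrite -mul_polyC rmorphM /= horner_mx_C rmorphXn /= horner_mx_X -mulmxE mul_scalar_mx.
Qed.

Section Hautus.
Variables (C : numClosedFieldType) (n : nat).
Variables (A : 'M[C]_n.+1) (b : 'cV[C]_n.+1).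
Definition Kal : 'M[C]_n.+1 := \matrix_(i, j) (A ^+ j *m b) i 0.

Lemma Kal_col (v : 'rV_n.+1) j : (v *m Kal) 0 j = (v *m A ^+ j *m b) 0 0.
Proof.
rewrite -mulmxA !mxE; apply: eq_bigr => i _; by rewrite mxE.
Qed.

Lemma kal_all (v : 'rV_n.+1) : v *m Kal = 0 -> forall k, v *m A ^+ k *m b = 0.
Proof.
move=> vK k.
have small : forall i, (i < n.+1)%N -> v *m A ^+ i *m b = 0.
  move=> i lti; apply/matrixP => x y; rewrite !ord1.
  by have := Kal_col v (Ordinal lti); rewrite vK /= mxE => <-; rewrite mxE.
have cH := Cayley_Hamilton A.
set c := char_poly A in cH.
have cn0 : c != 0 by rewrite monic_neq0 // char_poly_monic.
have -> : A ^+ k = horner_mx A ('X^k %% c).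
  rewrite -[in LHS](horner_mx_X A) -rmorphXn /= {1}(divp_eq 'X^k c).
  by rewrite rmorphD rmorphM /= cH mulr0 add0r.
rewrite horner_mx_expand mulmx_sumr mulmx_suml big1 // => i _.
rewrite -scalemxAr -scalemxAl small ?scaler0 //.
have := ltn_modp 'X^k c; rewrite cn0 /c size_char_poly => h.
exact: leq_trans (ltn_ord i) h.
Qed.

Lemma eig_pow (eta : 'rV_n.+1) l : eta *m A = l *: eta ->
  forall k, eta *m A ^+ k = l ^+ k *: eta.
Proof.
move=> h; elim=> [|k IH]; first by rewrite expr0 mulmx1 scale1r.
by rewrite exprSr -mulmxE mulmxA IH -scalemxAl h scalerA -exprSr.
Qed.

Lemma hautus : (\det Kal != 0) <->
  (forall eta : 'rV_n.+1, eta != 0 -> forall l, eta *m A = l *: eta ->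
     (eta *m b) 0 0 != 0).
Proof.
split.
  move=> dK eta en0 l hl; apply/negP => /eqP eb0.
  have : \det Kal == 0.
    apply/det0P; exists eta => //; apply/rowP => j.
    by rewrite Kal_col (@eig_pow _ _ hl) -scalemxAl mxE eb0 mulr0 mxE.
  by rewrite (negPf dK).
move=> H; apply/negP => /det0P [v vn0 vK].
pose W := kermx Kal.
have WK : W *m Kal = 0 := mulmx_ker Kal.
have stW : stablemx W A.
  apply/sub_kermxP; apply/row_matrixP => i.
  rewrite row0 2!row_mul.
  have : row i W *m Kal = 0 by rewrite -row_mul WK row0.
  move: (row i W) => w wK.
  apply/rowP => j; rewrite Kal_col.
  by rewrite -(mulmxA w A) mulmxE -exprS (@kal_all _ wK) !mxE.
have Wn0 : (0 < \rank W)%N.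
  rewrite lt0n mxrank_eq0; apply: contraNneq vn0 => W0.
  have : (v <= W)%MS by apply/sub_kermxP.
  by rewrite W0 submx0.
have [a /eigenvalueP [v' hv' v'n0]] := eigenvalue_closed (restrictmx W A) Wn0.
have : stablemx v' (restrictmx W A).
  by apply/eigenvectorP; exists a; apply/eigenspaceP.
rewrite stablemx_restrict // => /eigenvectorP [a' /eigenspaceP hu].
set u := v' *m row_base W in hu.
have un0 : u != 0 by rewrite /u mulmx_free_eq0 ?row_base_free.
have uW : (u <= W)%MS by rewrite /u (submx_trans (submxMl _ _)) // eq_row_base.
have uK : u *m Kal = 0 by apply/sub_kermxP.
have := H u un0 a' hu.
have := Kal_col u 0; rewrite uK expr0 mulmx1 mxE => <-.
by rewrite eqxx.
Qed.

End Hautus.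

Lemma sep_iff (C : closedFieldType) n (B : 'M[C]_n) :
  (exists s : seq C, [/\ size s = n, uniq s & forall z, z \in s -> eigenvalue B z])
  <-> separable_poly (char_poly B).
Proof.
have [rs hrs] := closed_field_poly_normal (char_poly B).
have mon := char_poly_monic B.
move: hrs; rewrite (eqP mon) scale1r => hrs.
have szrs : size rs = n.
  by have := size_char_poly B; rewrite hrs size_prod_XsubC => -[].
have eigE z : eigenvalue B z = (z \in rs).
  by rewrite eigenvalue_root_char hrs root_prod_XsubC.
have -> : separable_poly (char_poly B) = uniq rs.
  by rewrite hrs -separable_prod_XsubC unlock.
split.
  move=> [s [ss us hs]].
  have sub : {subset s <= rs} by move=> z /hs; rewrite eigE.
  have [sz eqs] := uniq_min_size us sub (eq_leq (etrans szrs (esym ss))).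
  by rewrite -(eq_uniq sz eqs).
move=> urs; exists rs; split => // z; by rewrite eigE.
Qed.


Section Real.
Variables (R : realType) (n : nat).
Local Notation M := 'M[R]_n.+1.
Local Notation f := (real_complex R).

Lemma toCE p q (X : 'M[R]_(p, q)) : toC X = map_mx f X.
Proof. by []. Qed.

Lemma map_mxXn (X : M) k : map_mx f (X ^+ k) = (map_mx f X) ^+ k.
Proof.
elim: k => [|k IH]; first by rewrite !expr0 map_mx1.
by rewrite !exprS -!mulmxE map_mxM IH.
Qed.

Definition cpA (A : M) := char_poly (A *m A).

Lemma N_iff (A : M) :
  sq_distinct_eig A <-> resultant (cpA A) (cpA A)^`() != 0.
Proof.
rewrite /sq_distinct_eig toCE.
have -> : resultant (cpA A) (cpA A)^`() != 0 =
          separable_poly (char_poly (map_mx f (A *m A))).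
  rewrite -map_char_poly separable_poly.unlock deriv_map coprimep_map.
  rewrite resultant_eq0 coprimep_def -leqNgt.
  have : size (gcdp (cpA A) (cpA A)^`()) != 0.
    by rewrite size_poly_eq0 gcdp_eq0 negb_and monic_neq0 // char_poly_monic.
  by case: (size _) => [|[|k]].
exact: sep_iff.
Qed.

Definition KalR (A : M) (b : 'cV[R]_n.+1) : M := \matrix_(i, j) (A ^+ j *m b) i 0.

Lemma O_iff (b : 'cV[R]_n.+1) (A : M) : obs_cond b A <-> \det (KalR A b) != 0.
Proof.
have -> : \det (KalR A b) != 0 = (\det (Kal _ _ (toC A) (toC b)) != 0).
  have -> : Kal _ _ (toC A) (toC b) = map_mx f (KalR A b).
    apply/matrixP => i j; rewrite [LHS]mxE !toCE -map_mxXn -map_mxM.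
    by rewrite !mxE.
  by rewrite det_map_mx fmorph_eq0.
rewrite (hautus _ _ (toC A) (toC b)) /obs_cond /left_eigenvector; split.
  move=> h eta en0 l hl; have := h eta (conj en0 (ex_intro _ l hl)).
  rewrite mxE; congr (_ != 0); apply: eq_bigr => j _.
  by rewrite mulrC mxE.
move=> h eta [en0 [l hl]]; have := h eta en0 l hl.
rewrite mxE; congr (_ != 0); apply: eq_bigr => j _.
by rewrite mulrC mxE.
Qed.

Lemma Good_det_id : Good R n.+1 (fun A : M => \det A).
Proof. by apply: Good_det; exact: Goodmx_id. Qed.

Lemma Good_res : Good R n.+1 (fun A : M => resultant (cpA A) (cpA A)^`()).
Proof.
have hc : PGood R n.+1 (fun A : M => cpA A).
  by apply: PGood_char_poly; apply: Goodmx_mul; exact: Goodmx_id.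
apply: (@Good_resultant _ _ _ _ n.+1 n) => //.
- exact: PGood_deriv.
- by move=> A; rewrite /cpA size_char_poly.
- by move=> A; rewrite polyorder.size_deriv /cpA size_char_poly.
Qed.

Lemma Good_kal b : Good R n.+1 (fun A : M => \det (KalR A b)).
Proof.
apply: Good_det => i j; under eq_fun do rewrite mxE.
by apply: Goodmx_mul; [exact: Goodmx_exp | exact: Goodmx_cst].
Qed.

Lemma res_sep (p : {poly R}) : p \is monic ->
  (resultant p p^`() != 0) = separable_poly p.
Proof.
move=> mp; rewrite separable_poly.unlock resultant_eq0 coprimep_def -leqNgt.
have : size (gcdp p p^`()) != 0.
  by rewrite size_poly_eq0 gcdp_eq0 negb_and monic_neq0.
by case: (size _) => [|[|k]].
Qed.

Lemma wit_res : exists A : M, resultant (cpA A) (cpA A)^`() != 0.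
Proof.
pose d : 'rV[R]_n.+1 := \row_i (i.+1)%:R.
exists (diag_mx d); rewrite res_sep ?char_poly_monic //.
rewrite /cpA mulmx_diag char_poly_trig ?diag_mx_is_trig //.
pose e (i : 'I_n.+1) : R := ((i.+1) ^ 2)%:R.
have -> : \prod_(i < n.+1) ('X - ((diag_mx (\row_j (d 0 j * d 0 j))) i i)%:P)
        = \prod_(x <- [seq e i | i <- enum 'I_n.+1]) ('X - x%:P).
  rewrite big_map big_enum /=; apply: eq_bigr => i _.
  by rewrite !mxE eqxx mulr1n /e natrX expr2.
rewrite separable_prod_XsubC map_inj_uniq ?enum_uniq // => i j.
move/eqP; rewrite /e eqr_nat eqn_exp2r // => /eqP [] h.
exact: val_inj.
Qed.

Definition Sh : M := \matrix_(i, j) ((i : nat) == j.+1)%:R.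
Definition e0 : 'cV[R]_n.+1 := \col_i ((i : nat) == 0)%:R.

Lemma Sh_pow j (k : 'I_n.+1) : (Sh ^+ j *m e0) k 0 = ((k : nat) == j)%:R.
Proof.
elim: j k => [|j IH] k; first by rewrite expr0 mul1mx mxE.
rewrite exprS -mulmxE -mulmxA mxE.
under eq_bigr do rewrite IH mxE.
have [hj | hj] := ltnP j n.+1.
  rewrite (bigD1 (Ordinal hj)) //= eqxx mulr1 big1 ?addr0 //.
  move=> l hl; rewrite (_ : ((l : nat) == j) = false) ?mulr0 //.
  by apply: contraNF hl => /eqP h; apply/eqP; apply: val_inj.
rewrite big1; last first.
  move=> l _; rewrite (_ : ((l : nat) == j) = false) ?mulr0 //.
  by apply/negbTE; rewrite neq_ltn (leq_trans (ltn_ord l) hj).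
rewrite (_ : ((k : nat) == j.+1) = false) //.
by apply/negbTE; rewrite neq_ltn (leq_trans (ltn_ord k)) // ltnW.
Qed.

Lemma wit_kal (b : 'cV[R]_n.+1) : b != 0 -> exists A : M, \det (KalR A b) != 0.
Proof.
move=> hb.
pose bt := b^T.
have rk : \rank bt = 1%N by rewrite rank_rV trmx_eq0 hb.
have H := mulmx_ebase bt; rewrite rk in H.
set c := col_ebase bt in H; set Q := row_ebase bt in H.
pose P := Q^T.
have PU : P \in unitmx by rewrite unitmx_tr row_ebase_unit.
have cU : c^T \in unitmx by rewrite unitmx_tr col_ebase_unit.
have c0 : c^T 0 0 != 0 by move: cU; rewrite unitmxE det_mx11 unitfE.
have pe : (pid_mx 1 : 'M[R]_(n.+1, 1)) = e0.
  apply/matrixP => i j; rewrite !mxE !ord1 /=.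
  by case: i => [[|k]].
have bE : b = P *m e0 *m c^T.
  by rewrite -pe -(tr_pid_mx _ 1 n.+1) -!trmx_mul mulmxA H trmxK.
exists (P *m Sh *m invmx P).
have powE j : (P *m Sh *m invmx P) ^+ j = P *m Sh ^+ j *m invmx P.
  elim: j => [|j IH]; first by rewrite !expr0 mulmx1 mulmxV.
  by rewrite exprS IH [in RHS]exprS -!mulmxE !mulmxA mulmxKV.
have -> : KalR (P *m Sh *m invmx P) b = c^T 0 0 *: P.
  apply/matrixP => i j; rewrite mxE powE bE.
  rewrite !mulmxA mulmxKV // mxE big_ord1 -mulmxA mxE [RHS]mxE.
  under eq_bigr do rewrite Sh_pow.
  rewrite (bigD1 j) //= eqxx mulr1 big1 ?addr0 1?mulrC //.
  move=> l hl; rewrite (_ : ((l : nat) == j) = false) ?mulr0 //.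
  by apply: contraNF hl => /eqP h; apply/eqP; apply: val_inj.
by rewrite detZ mulf_neq0 ?expf_neq0 // -unitfE -unitmxE.
Qed.

End Real.
Arguments cpA {R n}.
Arguments KalR {R n}.

Section Main.
Local Open Scope classical_set_scope.

Lemma lemma1_aux (R : realType) (n : nat) (b : 'cV[R]_n) (hb : b != 0) :
  open (good_set b : set 'M[R]_n) /\ dense (good_set b : set 'M[R]_n).
Proof.
case: n b hb => [|n] b hb.
  by move: hb; rewrite flatmx0 eqxx.
have E : good_set b = [set A : 'M[R]_n.+1 | \det A != 0] `&`
   ([set A | resultant (cpA A) (cpA A)^`() != 0] `&`
    [set A | \det (KalR A b) != 0]).
  apply/seteqP; split => A /=; rewrite /good_set /= unitmxE unitfE.
    by move=> [-> [/N_iff -> /O_iff ->]].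
  by move=> [-> [/N_iff ? /O_iff ?]].
have o1 : open [set A : 'M[R]_n.+1 | \det A != 0].
  by apply: Good_open; exact: Good_det_id.
have o2 : open [set A : 'M[R]_n.+1 | resultant (cpA A) (cpA A)^`() != 0].
  by apply: Good_open; exact: Good_res.
have o3 : open [set A : 'M[R]_n.+1 | \det (KalR A b) != 0].
  by apply: Good_open; exact: Good_kal.
rewrite E; split; first by apply: openI => //; exact: openI.
apply: denseI => //.
  apply: Good_dense; first exact: Good_det_id.
  by exists 1%:M; rewrite det1 oner_eq0.
apply: denseI => //.
  by apply: Good_dense; [exact: Good_res | exact: wit_res].
by apply: Good_dense; [exact: Good_kal | exact: wit_kal].
Qed.

End Main.

Theorem lemma1 (R : realType) (n : nat) (b : 'cV[R]_n) (hb : b != 0) :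
  open (good_set b : set 'M[R]_n) /\ dense (good_set b : set 'M[R]_n).
Proof. exact: lemma1_aux. Qed.
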